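(* Let $G$ be an infinite group that satisfies a non-trivial mixed identity $w \in G \ast \mathbb{Z}$ of length $k$. Then exactly one of the following holds: (1) there exists a set $\Omega$ and an injective homomorphism $G \to \mathrm{Sym}(\Omega)$ whose image contains $\mathrm{Alt}_f(\Omega)$; (2) $td(G) < k$.
   Context: Let $t$ be a generator of $\mathbb{Z}$. For $w \in G \ast \mathbb{Z}$, $G$ satisfies the mixed identity $w = 1$ if every homomorphism $G \ast \mathbb{Z} \to G$ that restricts to the identity on $G$ sends $w$ to $1$; the mixed identity is non-trivial if $w \neq 1$ in $G \ast \mathbb{Z}$. The length of $w$ is its word length with respect to the generating set $G \cup \{t^{\pm 1}\}$. For an infinite set $\Omega$, $\mathrm{Sym}_f(\Omega)$ is the group of finitely supported permutations of $\Omega$ and $\mathrm{Alt}_f(\Omega)$ its alternating subgroup. The transitivity degree $td(G)$ is the supremum of all $k$ such that $G$ admits a faithful action on some set that is transitive on ordered $k$-tuples of distinct elements. *)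

(* Defs.v *)
From Stdlib Require Import List Arith.
Import ListNotations.

Record Group := {
  gcar :> Type;
  gmul : gcar -> gcar -> gcar;
  gone : gcar;
  ginv : gcar -> gcar;
  gmulA : forall x y z, gmul x (gmul y z) = gmul (gmul x y) z;
  gmul1l : forall x, gmul gone x = x;
  gmul1r : forall x, gmul x gone = x;
  gmulVl : forall x, gmul (ginv x) x = gone;
  gmulVr : forall x, gmul x (ginv x) = gone
}.

Definition finite_type (T : Type) : Prop := exists l : list T, forall x, In x l.
Definition infinite_type (T : Type) : Prop := ~ finite_type T.

Section FreeProduct.
Variable G : Group.

(* Letters of words over the generating set G ∪ {t, t^-1}:
   inl g is the element g of G, inr true is t, inr false is t^-1. *)
Definition letter := (gcar G + bool)%type.
Definition word := list letter.

(* Elements of G * Z are words modulo the congruence generated by the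
   multiplication table of G (and 1 = empty word) and t t^-1 = t^-1 t = 1. *)
Inductive wequiv : word -> word -> Prop :=
| wequiv_refl u : wequiv u u
| wequiv_sym u v : wequiv u v -> wequiv v u
| wequiv_trans u v x : wequiv u v -> wequiv v x -> wequiv u x
| wequiv_mul u v (g h : gcar G) :
    wequiv (u ++ [inl g; inl h] ++ v) (u ++ [inl (gmul G g h)] ++ v)
| wequiv_one u v : wequiv (u ++ [inl (gone G)] ++ v) (u ++ v)
| wequiv_tt u v (b : bool) : wequiv (u ++ [inr b; inr (negb b)] ++ v) (u ++ v).

(* The image of a word under the homomorphism G * Z -> G which is the
   identity on G and sends t to tau. *)
Definition eval_letter (tau : gcar G) (a : letter) : gcar G :=
  match a with
  | inl g => g
  | inr true => tau
  | inr false => ginv G tau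
  end.

Fixpoint eval_word (tau : gcar G) (w : word) : gcar G :=
  match w with
  | [] => gone G
  | a :: w' => gmul G (eval_letter tau a) (eval_word tau w')
  end.

Definition mixed_identity (w : word) : Prop :=
  forall tau : gcar G, eval_word tau w = gone G.

Definition nontrivial (w : word) : Prop := ~ wequiv w [].

Definition word_length (w : word) (k : nat) : Prop :=
  (exists u, wequiv w u /\ length u = k) /\
  (forall u, wequiv w u -> k <= length u).

(* Left actions of G on a type Omega (= homomorphisms G -> Sym(Omega)). *)
Definition is_action (Omega : Type) (act : gcar G -> Omega -> Omega) : Prop :=
  (forall x, act (gone G) x = x) /\
  (forall g h x, act (gmul G g h) x = act g (act h x)).

Definition faithful (Omega : Type) (act : gcar G -> Omega -> Omega) : Prop :=
  forall g h, (forall x, act g x = act h x) -> g = h.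

Definition distinct_tuple (Omega : Type) (m : nat) (x : nat -> Omega) : Prop :=
  forall i j, i < m -> j < m -> x i = x j -> i = j.

Definition m_transitive (Omega : Type) (act : gcar G -> Omega -> Omega) (m : nat)
  : Prop :=
  forall x y : nat -> Omega, distinct_tuple Omega m x -> distinct_tuple Omega m y ->
    exists g, forall i, i < m -> act g (x i) = y i.

(* td(G) < k, for k a natural number: every m such that G admits a faithful
   action transitive on ordered m-tuples of distinct points is < k
   (i.e. the supremum of such m is < k). *)
Definition td_lt (k : nat) : Prop :=
  forall (m : nat) (Omega : Type) (act : gcar G -> Omega -> Omega),
    is_action Omega act -> faithful Omega act -> m_transitive Omega act m -> m < k.

End FreeProduct.

(* Transpositions and the finitary alternating group Alt_f(Omega):
   products of an even number of transpositions. *)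
Definition is_transposition (Omega : Type) (s : Omega -> Omega) : Prop :=
  exists a b, a <> b /\ s a = b /\ s b = a /\
    forall x, x <> a -> x <> b -> s x = x.

Fixpoint compose_all (Omega : Type) (l : list (Omega -> Omega)) : Omega -> Omega :=
  match l with
  | [] => fun x => x
  | s :: l' => fun x => s (compose_all Omega l' x)
  end.

Definition in_Alt_f (Omega : Type) (sigma : Omega -> Omega) : Prop :=
  exists l : list (Omega -> Omega),
    Forall (is_transposition Omega) l /\ Nat.Even (length l) /\
    forall x, compose_all Omega l x = sigma x.

Definition contains_Alt_f (G : Group) : Prop :=
  exists (Omega : Type) (act : gcar G -> Omega -> Omega),
    infinite_type Omega /\ is_action G Omega act /\ faithful G Omega act /\
    forall sigma, in_Alt_f Omega sigma -> exists g, forall x, act g x = sigma x.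

(* Main.v *)
Require Import Defs.
From Stdlib Require Import List Arith Lia Classical ClassicalEpsilon.
Import ListNotations.

Lemma act_one (G : Group) (Omega : Type) (act : gcar G -> Omega -> Omega) :
  is_action G Omega act -> forall x, act (gone G) x = x.
Proof. intros [H1 H2]; exact H1. Qed.

Lemma act_mul (G : Group) (Omega : Type) (act : gcar G -> Omega -> Omega) :
  is_action G Omega act -> forall g h x, act (gmul G g h) x = act g (act h x).
Proof. intros [H1 H2]; exact H2. Qed.

Lemma act_invl (G : Group) (Omega : Type) (act : gcar G -> Omega -> Omega) :
  is_action G Omega act -> forall g x, act (ginv G g) (act g x) = x.
Proof. intros Ha g x. rewrite <- (act_mul _ _ _ Ha), gmulVl. apply (act_one _ _ _ Ha). Qed.

Lemma act_invr (G : Group) (Omega : Type) (act : gcar G -> Omega -> Omega) :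
  is_action G Omega act -> forall g x, act g (act (ginv G g) x) = x.
Proof. intros Ha g x. rewrite <- (act_mul _ _ _ Ha), gmulVr. apply (act_one _ _ _ Ha). Qed.

Lemma fresh (Omega : Type) : infinite_type Omega -> forall l : list Omega, exists x, ~ In x l.
Proof.
  intros Hinf l. apply NNPP. intro H. apply Hinf. exists l. intro x.
  apply NNPP. intro Hx. apply H. exists x. exact Hx.
Qed.

Fixpoint all_lists {A : Type} (l : list A) (n : nat) : list (list A) :=
  match n with
  | 0 => [[]]
  | S n' => flat_map (fun a => map (cons a) (all_lists l n')) l
  end.

Lemma all_lists_spec {A : Type} (l : list A) : forall s : list A,
  (forall x, In x s -> In x l) -> In s (all_lists l (length s)).
Proof.
  induction s as [|a s IH]; intros Hs; simpl.
  - left; reflexivity.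
  - apply in_flat_map. exists a. split. apply Hs; left; auto.
    apply in_map. apply IH. intros x Hx; apply Hs; right; auto.
Qed.

Lemma choose_list {A B : Type} (code : A -> B) : forall C : list B,
  exists LA : list A, forall a, In (code a) C -> exists a', In a' LA /\ code a' = code a.
Proof.
  induction C as [|c C IH].
  - exists []. intros a [].
  - destruct IH as [LA HLA].
    destruct (classic (exists a, code a = c)) as [[a0 Ha0]|Hn].
    + exists (a0 :: LA). intros a [Hc|Hc].
      * exists a0. split; [left; auto|]. congruence.
      * destruct (HLA a Hc) as [a' [H1 H2]]. exists a'. split; [right; auto|auto].
    + exists LA. intros a [Hc|Hc].
      * exfalso; apply Hn; exists a; auto.
      * apply HLA; auto.
Qed.

Lemma map_eq_in {A B : Type} (f g : A -> B) : forall l, map f l = map g l -> forall x, In x l -> f x = g x.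
Proof.
  induction l as [|a l IH]; simpl; intros H x Hx. destruct Hx.
  injection H as H1 H2. destruct Hx as [<-|Hx]; auto.
Qed.

Lemma omega_infinite (G : Group) (Omega : Type) (act : gcar G -> Omega -> Omega) :
  faithful G Omega act -> infinite_type (gcar G) -> infinite_type Omega.
Proof.
  intros Hf HG [l Hl]. apply HG.
  set (code := fun g => map (act g) l).
  destruct (choose_list code (all_lists l (length l))) as [LA HLA].
  exists LA. intro g.
  assert (Hc : In (code g) (all_lists l (length l))).
  { replace (length l) with (length (code g)) by (unfold code; apply length_map).
    apply all_lists_spec. intros x Hx. apply Hl. }
  destruct (HLA g Hc) as [g' [Hin Heq]].
  replace g with g'; auto. apply Hf. intro x. apply (map_eq_in _ _ l Heq). apply Hl.
Qed.

Lemma extend_nodup (Omega : Type) : infinite_type Omega -> forall n (l : list Omega),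
  NoDup l -> length l <= n -> exists l', NoDup (l ++ l') /\ length (l ++ l') = n.
Proof.
  intros Hinf n. induction n as [|n IH]; intros l Hl Hlen.
  - exists []. rewrite app_nil_r. split; auto. destruct l; simpl in *; auto; lia.
  - destruct (Nat.eq_dec (length l) (S n)) as [E|E].
    + exists []. rewrite app_nil_r. auto.
    + destruct (IH l Hl ltac:(lia)) as [l' [H1 H2]].
      destruct (fresh _ Hinf (l ++ l')) as [x Hx].
      exists (l' ++ [x]). rewrite app_assoc. split.
      * apply NoDup_app; auto. constructor; auto. constructor.
        intros a Ha Hb. destruct Hb as [<-|[]]. auto.
      * rewrite length_app, H2. simpl. lia.
Qed.

Definition realizes (G : Group) (Omega : Type) (act : gcar G -> Omega -> Omega) (g : gcar G)
  (P : list (Omega * Omega)) : Prop := forall q, In q P -> act g (fst q) = snd q.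

Lemma trans_list (G : Group) (Omega : Type) (act : gcar G -> Omega -> Omega) (m : nat) :
  infinite_type Omega -> m_transitive G Omega act m ->
  forall P : list (Omega * Omega), NoDup (map fst P) -> NoDup (map snd P) -> length P <= m ->
  exists g, realizes G Omega act g P.
Proof.
  intros Hinf Htr P H1 H2 Hlen.
  destruct (extend_nodup _ Hinf m (map fst P) H1 ltac:(rewrite length_map; lia)) as [l1 [N1 L1]].
  destruct (extend_nodup _ Hinf m (map snd P) H2 ltac:(rewrite length_map; lia)) as [l2 [N2 L2]].
  destruct (fresh _ Hinf []) as [d _].
  destruct (Htr (fun i => nth i (map fst P ++ l1) d) (fun i => nth i (map snd P ++ l2) d)) as [g Hg].
  - intros i j Hi Hj. apply (NoDup_nth _ d). exact N1. lia. lia.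
  - intros i j Hi Hj. apply (NoDup_nth _ d). exact N2. lia. lia.
  - exists g. intros q Hq. destruct (In_nth _ _ (d,d) Hq) as [i [Hi Hqi]].
    specialize (Hg i ltac:(lia)).
    rewrite !app_nth1 in Hg by (rewrite length_map; lia).
    assert (E1 : nth i (map fst P) d = fst (nth i P (d,d))) by exact (map_nth fst P (d,d) i).
    assert (E2 : nth i (map snd P) d = snd (nth i P (d,d))) by exact (map_nth snd P (d,d) i).
    rewrite E1, E2, Hqi in Hg. exact Hg.
Qed.

Definition tr {Omega : Type} (a b : Omega) : Omega -> Omega :=
  fun x => if excluded_middle_informative (x = a) then b
           else if excluded_middle_informative (x = b) then a else x.

Lemma tr_is (Omega : Type) (a b : Omega) : a <> b -> is_transposition Omega (tr a b).
Proof.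
  intro Hab. exists a, b. unfold tr. repeat split; auto.
  - destruct (excluded_middle_informative (a = a)); congruence.
  - destruct (excluded_middle_informative (b = a)); [congruence|].
    destruct (excluded_middle_informative (b = b)); congruence.
  - intros x H1 H2. destruct (excluded_middle_informative (x = a)); [congruence|].
    destruct (excluded_middle_informative (x = b)); congruence.
Qed.

Lemma tr_a {Omega : Type} (a b : Omega) : tr a b a = b.
Proof. unfold tr. destruct (excluded_middle_informative (a = a)); congruence. Qed.
Lemma tr_b {Omega : Type} (a b : Omega) : tr a b b = a.
Proof. unfold tr. destruct (excluded_middle_informative (b = a)); [congruence|].
  destruct (excluded_middle_informative (b = b)); congruence. Qed.
Lemma tr_o {Omega : Type} (a b x : Omega) : x <> a -> x <> b -> tr a b x = x.
Proof. intros. unfold tr. destruct (excluded_middle_informative (x = a)); [congruence|].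
  destruct (excluded_middle_informative (x = b)); congruence. Qed.

Lemma compose_all_app (Omega : Type) (l1 l2 : list (Omega -> Omega)) x :
  compose_all Omega (l1 ++ l2) x = compose_all Omega l1 (compose_all Omega l2 x).
Proof. induction l1; simpl; congruence. Qed.

Lemma alt_comp (Omega : Type) (s1 s2 : Omega -> Omega) :
  in_Alt_f Omega s1 -> in_Alt_f Omega s2 -> in_Alt_f Omega (fun x => s1 (s2 x)).
Proof.
  intros [l1 [F1 [E1 C1]]] [l2 [F2 [E2 C2]]]. exists (l1 ++ l2). split; [|split].
  - apply Forall_app; auto.
  - rewrite length_app. destruct E1 as [a Ha], E2 as [b Hb]. exists (a + b). lia.
  - intro x. rewrite compose_all_app, C2, C1. reflexivity.
Qed.

Lemma alt_id (Omega : Type) : in_Alt_f Omega (fun x => x).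
Proof. exists []. split; [constructor|split]. exists 0; reflexivity. intro; reflexivity. Qed.

Definition cyc {Omega : Type} (p q r : Omega) : Omega -> Omega := fun x => tr p r (tr p q x).

Lemma cyc_alt (Omega : Type) (p q r : Omega) : p <> q -> p <> r -> in_Alt_f Omega (cyc p q r).
Proof.
  intros. exists [tr p r; tr p q]. split; [|split].
  - repeat constructor; apply tr_is; auto.
  - exists 1; reflexivity.
  - intro; reflexivity.
Qed.

Lemma cyc_p {Omega : Type} (p q r : Omega) : p <> q -> q <> r -> p <> r -> cyc p q r p = q.
Proof. intros. unfold cyc. rewrite tr_a, tr_o; auto. Qed.
Lemma cyc_o {Omega : Type} (p q r x : Omega) : x <> p -> x <> q -> x <> r -> cyc p q r x = x.
Proof. intros. unfold cyc. rewrite (tr_o p q), tr_o; auto. Qed.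

Lemma tr_invol (Omega : Type) (t : Omega -> Omega) : is_transposition Omega t -> forall x, t (t x) = x.
Proof.
  intros [a [b [Hab [Ha [Hb Ho]]]]] x.
  destruct (classic (x = a)) as [->|Hxa]. rewrite Ha; auto.
  destruct (classic (x = b)) as [->|Hxb]. rewrite Hb; auto.
  rewrite (Ho x Hxa Hxb). apply Ho; auto.
Qed.

Lemma alt_inj (Omega : Type) (s : Omega -> Omega) : in_Alt_f Omega s -> forall x y, s x = s y -> x = y.
Proof.
  intros [l [F [_ C]]] x y E. rewrite <- !C in E. clear C.
  induction l as [|t l IH]; simpl in *; auto.
  inversion F; subst. apply IH; auto.
  rewrite <- (tr_invol _ t H1 (compose_all Omega l x)), <- (tr_invol _ t H1 (compose_all Omega l y)).
  congruence.
Qed.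

Lemma alt_tuple (Omega : Type) : infinite_type Omega -> forall j (x y : nat -> Omega),
  distinct_tuple Omega j x -> distinct_tuple Omega j y ->
  exists s, in_Alt_f Omega s /\ forall i, i < j -> s (x i) = y i.
Proof.
  intros Hinf j. induction j as [|j IH]; intros x y Dx Dy.
  - exists (fun z => z). split. apply alt_id. intros; lia.
  - destruct (IH x y) as [s [Hs Hsi]].
    { intros i i' Hi Hi' E. apply Dx; auto; lia. }
    { intros i i' Hi Hi' E. apply Dy; auto; lia. }
    destruct (classic (s (x j) = y j)) as [E|E].
    + exists s. split; auto. intros i Hi. destruct (Nat.eq_dec i j) as [->|Ne]; auto. apply Hsi; lia.
    + destruct (fresh _ Hinf (s (x j) :: map y (seq 0 (S j)))) as [f Hf].
      assert (Hfp : f <> s (x j)) by (intro; apply Hf; left; auto).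
      assert (Hfy : forall i, i <= j -> f <> y i).
      { intros i Hi Ei. apply Hf. right. rewrite Ei. apply in_map. apply in_seq. lia. }
      exists (fun z => cyc (s (x j)) (y j) f (s z)). split.
      * apply alt_comp; auto. apply cyc_alt; auto.
      * intros i Hi. destruct (Nat.eq_dec i j) as [->|Ne].
        -- apply cyc_p; auto. intro Hc; apply (Hfy j); auto.
        -- rewrite (Hsi i) by lia. apply cyc_o.
           ++ intro Hc. rewrite <- (Hsi i) in Hc by lia. apply (alt_inj _ _ Hs) in Hc.
              apply Ne. apply Dx; auto; lia.
           ++ intro Hc. apply Ne. apply Dy; auto; lia.
           ++ intro Hc. apply (Hfy i); auto; lia.
Qed.

Lemma alt_mtrans (G : Group) (Omega : Type) (act : gcar G -> Omega -> Omega) (m : nat) :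
  infinite_type Omega ->
  (forall sigma, in_Alt_f Omega sigma -> exists g, forall x, act g x = sigma x) ->
  m_transitive G Omega act m.
Proof.
  intros Hinf Hall x y Dx Dy. destruct (alt_tuple _ Hinf m x y Dx Dy) as [s [Hs Hsi]].
  destruct (Hall s Hs) as [g Hg]. exists g. intros i Hi. rewrite Hg; auto.
Qed.

Lemma stab_list (G : Group) (Omega : Type) (act : gcar G -> Omega -> Omega) (a x : Omega) :
  forall Y : list Omega, exists D : list (gcar G), (forall d, In d D -> act d a = a) /\
    forall y, In y Y -> (exists d, act d a = a /\ act d x = y) -> exists d, In d D /\ act d x = y.
Proof.
  induction Y as [|y Y [D [HD1 HD2]]].
  - exists []. split. intros d []. intros y [].
  - destruct (classic (exists d, act d a = a /\ act d x = y)) as [[d0 [Hd1 Hd2]]|Hn].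
    + exists (d0 :: D). split.
      * intros d [<-|Hd]; auto.
      * intros y' [<-|Hy] Hex. exists d0; split; [left|]; auto.
        destruct (HD2 y' Hy Hex) as [d [H1 H2]]. exists d; split; [right|]; auto.
    + exists D. split; auto. intros y' [<-|Hy] Hex. contradiction. auto.
Qed.

Definition fneq {Omega : Type} (x : Omega) (q : Omega * Omega) : bool :=
  if excluded_middle_informative (fst q = x) then false else true.

Lemma fneq_true {Omega : Type} (x : Omega) q : fneq x q = true <-> fst q <> x.
Proof. unfold fneq. destruct (excluded_middle_informative (fst q = x)); split; intros; congruence. Qed.

Lemma neumann (G : Group) (Omega : Type) (act : gcar G -> Omega -> Omega) :
  is_action G Omega act -> infinite_type Omega -> forall a : Omega,
  (forall x z, x <> a -> z <> a -> exists h, act h a = a /\ act h x = z) ->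
  forall X L, (forall q, In q L -> In (fst q) X /\ fst q <> a) ->
  exists h, act h a = a /\ forall q, In q L -> act h (fst q) <> snd q.
Proof.
  intros Hact Hinf a TR2 X. induction X as [|x X IH]; intros L HL.
  - exists (gone G). split. apply (act_one _ _ _ Hact).
    intros q Hq. destruct (HL q Hq) as [[] _].
  - destruct (classic (x = a)) as [Exa|Nxa].
    + apply IH. intros q Hq. destruct (HL q Hq) as [[E|E] N]; [congruence|auto].
    + set (Lo := filter (fneq x) L).
      destruct (fresh _ Hinf (a :: map snd L)) as [z Hz].
      assert (Hza : z <> a) by (intro; apply Hz; left; auto).
      destruct (TR2 x z Nxa Hza) as [c [Hca Hcx]].
      destruct (stab_list G Omega act a x (map snd L)) as [D [HD1 HD2]].
      set (L' := Lo ++ flat_map (fun d => map (fun q => (fst q, act (gmul G d (ginv G c)) (snd q))) Lo) D).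
      assert (HLo : forall q, In q Lo <-> In q L /\ fst q <> x).
      { intro q. unfold Lo. rewrite filter_In, fneq_true. tauto. }
      destruct (IH L') as [h' [Hh'a Hh']].
      { intros q Hq. unfold L' in Hq. apply in_app_or in Hq. destruct Hq as [Hq|Hq].
        - apply HLo in Hq. destruct Hq as [Hq Nq]. destruct (HL q Hq) as [[E|E] N]; [congruence|auto].
        - apply in_flat_map in Hq. destruct Hq as [d [_ Hq]]. apply in_map_iff in Hq.
          destruct Hq as [q0 [<- Hq0]]. simpl. apply HLo in Hq0. destruct Hq0 as [Hq0 Nq0].
          destruct (HL q0 Hq0) as [[E|E] N]; [congruence|auto]. }
      destruct (classic (exists q0, In q0 L /\ fst q0 = x /\ act h' x = snd q0)) as [[q0 [Hq0 [Fq0 Sq0]]]|Hno].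
      * destruct (HD2 (snd q0) (in_map _ _ _ Hq0) (ex_intro _ h' (conj Hh'a Sq0))) as [d [HdD Hdx]].
        exists (gmul G c (gmul G (ginv G d) h')). split.
        { rewrite !(act_mul _ _ _ Hact), Hh'a. rewrite <- (HD1 d HdD) at 1.
          rewrite (act_invl _ _ _ Hact). auto. }
        intros q Hq. rewrite !(act_mul _ _ _ Hact).
        destruct (classic (fst q = x)) as [Fq|Fq].
        -- rewrite Fq, Sq0, <- Hdx, (act_invl _ _ _ Hact), Hcx. intro E. apply Hz. right.
           rewrite E. apply in_map; auto.
        -- intro E. apply (Hh' (fst q, act (gmul G d (ginv G c)) (snd q))).
           ++ unfold L'. apply in_or_app. right. apply in_flat_map. exists d. split; auto.
              apply in_map_iff. exists q. split; auto. apply HLo. auto.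
           ++ simpl. rewrite <- E, !(act_mul _ _ _ Hact), !(act_invl _ _ _ Hact), (act_invr _ _ _ Hact). auto.
      * exists h'. split; auto. intros q Hq. destruct (classic (fst q = x)) as [Fq|Fq].
        -- intro E. apply Hno. exists q. rewrite <- Fq. auto.
        -- apply Hh'. unfold L'. apply in_or_app. left. apply HLo. auto.
Qed.

Definition cyc_spec (G : Group) (Omega : Type) (act : gcar G -> Omega -> Omega) (g : gcar G)
  (p q r : Omega) : Prop :=
  act g p = q /\ act g q = r /\ act g r = p /\ forall x, x <> p -> x <> q -> x <> r -> act g x = x.

Lemma three_cycle (G : Group) (Omega : Type) (act : gcar G -> Omega -> Omega) :
  is_action G Omega act -> infinite_type Omega ->
  (forall x1 x2 z1 z2, x1 <> x2 -> z1 <> z2 -> exists h, act h x1 = z1 /\ act h x2 = z2) ->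
  forall g (l : list Omega) a, (forall x, act g x <> x -> In x l) -> act g a <> a ->
  exists y p q r, p <> q /\ q <> r /\ p <> r /\ cyc_spec G Omega act y p q r.
Proof.
  intros Hact Hinf TR2 g l a Hl Hga.
  pose proof (act_invl _ _ _ Hact) as IL. pose proof (act_invr _ _ _ Hact) as IR.
  pose proof (act_mul _ _ _ Hact) as AM.
  destruct (neumann G Omega act Hact Hinf a) with (X := l) (L := filter (fneq a) (list_prod l l))
    as [h [ha Hh]].
  { intros x z Hx Hz. apply TR2; auto. }
  { intros q Hq. apply filter_In in Hq. destruct Hq as [Hq Nq]. apply fneq_true in Nq.
    destruct q as [q1 q2]. apply in_prod_iff in Hq. simpl. tauto. }
  assert (Hh2 : forall x, In x l -> x <> a -> ~ In (act h x) l).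
  { intros x Hx Nx Hin. apply (Hh (x, act h x)); auto. apply filter_In. split.
    apply in_prod; auto. apply fneq_true; auto. }
  assert (hia : act (ginv G h) a = a) by (rewrite <- ha at 1; apply IL).
  assert (Hhi : forall x, In x l -> x <> a -> ~ In (act (ginv G h) x) l).
  { intros x Hx Nx Hin. destruct (classic (act (ginv G h) x = a)) as [E|E].
    - apply Nx. rewrite <- (IR h x), E. auto.
    - apply (Hh2 _ Hin E). rewrite IR. auto. }
  assert (Mo : forall x, ~ In x l -> act g x = x).
  { intros x Hx. apply NNPP. intro H. apply Hx, Hl, H. }
  assert (Mi : forall x, ~ In x l -> act (ginv G g) x = x).
  { intros x Hx. rewrite <- (Mo x Hx) at 1. apply IL. }
  assert (Gi_in : forall x, In x l -> In (act (ginv G g) x) l).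
  { intros x Hx. apply NNPP. intro H. pose proof (Mo _ H) as E. rewrite IR in E.
    apply H. rewrite <- E. exact Hx. }
  assert (Ha : In a l) by (apply Hl; auto).
  assert (Hb : In (act g a) l).
  { apply Hl. intro E. apply Hga. rewrite <- (IL g (act g a)). rewrite E. apply IL. }
  assert (Na' : act (ginv G g) a <> a).
  { intro E. apply Hga. pose proof (IR g a) as F. rewrite E in F. exact F. }
  assert (Ina' : In (act (ginv G g) a) l) by (apply Gi_in; auto).
  assert (Hc : ~ In (act h (act g a)) l) by (apply Hh2; auto).
  exists (gmul G g (gmul G h (gmul G g (gmul G (ginv G h) (gmul G (ginv G g)
           (gmul G h (gmul G (ginv G g) (ginv G h)))))))), a, (act g a), (act h (act g a)).
  split; [auto|split; [intro E; apply Hc; rewrite <- E; auto|split; [intro E; apply Hc; rewrite <- E; auto|]]].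
  unfold cyc_spec. rewrite !AM. split; [|split; [|split]].
  - rewrite hia, (Mi _ (Hh2 _ Ina' Na')), (IL h), (IR g a), ha. reflexivity.
  - rewrite (Mi _ (Hhi _ Hb Hga)), (IR h), (IL g a), hia, (Mo _ Hc). reflexivity.
  - rewrite (IL h (act g a)), (IL g a), ha, (Mo _ (Hhi _ Ina' Na')), (IR h), (IR g a). reflexivity.
  - intros x N1 N2 N3. rewrite !AM. destruct (classic (In (act (ginv G h) x) l)) as [Hw|Hw].
    + assert (Nw : act (ginv G h) x <> a).
      { intro E. apply N1. rewrite <- (IR h x), E. auto. }
      assert (Hxl : ~ In x l).
      { pose proof (Hh2 _ Hw Nw) as F. rewrite IR in F. exact F. }
      assert (Nw' : act (ginv G g) (act (ginv G h) x) <> a).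
      { intro E. apply N3. rewrite <- E, IR, IR. reflexivity. }
      rewrite (Mi _ (Hh2 _ (Gi_in _ Hw) Nw')), (IL h), (IR g), (IR h x), (Mo _ Hxl). reflexivity.
    + destruct (classic (In x l)) as [Hx|Hx].
      * assert (Nr : act (ginv G g) x <> a).
        { intro E. apply N2. rewrite <- E, IR. reflexivity. }
        rewrite (Mi _ Hw), (IR h x), (Mo _ (Hhi _ (Gi_in _ Hx) Nr)), (IR h), (IR g x). reflexivity.
      * rewrite (Mi _ Hw), (IR h x), (Mi _ Hx), (Mo _ Hw), (IR h x), (Mo _ Hx). reflexivity.
Qed.

Lemma all_cycles (G : Group) (Omega : Type) (act : gcar G -> Omega -> Omega) :
  is_action G Omega act ->
  (forall P : list (Omega * Omega), NoDup (map fst P) -> NoDup (map snd P) -> length P <= 3 ->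
     exists g, realizes G Omega act g P) ->
  forall y a b c, a <> b -> b <> c -> a <> c -> cyc_spec G Omega act y a b c ->
  forall p q r, p <> q -> q <> r -> p <> r -> exists z, cyc_spec G Omega act z p q r.
Proof.
  intros Hact TR y a b c Nab Nbc Nac [ya [yb [yc yo]]] p q r Npq Nqr Npr.
  pose proof (act_invl _ _ _ Hact) as IL. pose proof (act_invr _ _ _ Hact) as IR.
  pose proof (act_mul _ _ _ Hact) as AM.
  destruct (TR [(a,p);(b,q);(c,r)]) as [h Hh].
  { simpl. repeat constructor; simpl; intuition. }
  { simpl. repeat constructor; simpl; intuition. }
  { simpl; lia. }
  assert (ha : act h a = p) by (apply (Hh (a,p)); simpl; auto).
  assert (hb : act h b = q) by (apply (Hh (b,q)); simpl; auto).
  assert (hc : act h c = r) by (apply (Hh (c,r)); simpl; auto).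
  assert (hia : act (ginv G h) p = a) by (rewrite <- ha; apply IL).
  assert (hib : act (ginv G h) q = b) by (rewrite <- hb; apply IL).
  assert (hic : act (ginv G h) r = c) by (rewrite <- hc; apply IL).
  exists (gmul G h (gmul G y (ginv G h))). unfold cyc_spec. rewrite !AM.
  split; [|split; [|split]].
  - rewrite hia, ya, hb; auto.
  - rewrite hib, yb, hc; auto.
  - rewrite hic, yc, ha; auto.
  - intros x N1 N2 N3. rewrite !AM. rewrite yo. apply IR.
    + intro E. apply N1. rewrite <- (IR h x), E; auto.
    + intro E. apply N2. rewrite <- (IR h x), E; auto.
    + intro E. apply N3. rewrite <- (IR h x), E; auto.
Qed.

Lemma tr_spec_sym (Omega : Type) (t : Omega -> Omega) a b :
  (a <> b /\ t a = b /\ t b = a /\ forall x, x <> a -> x <> b -> t x = x) ->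
  (b <> a /\ t b = a /\ t a = b /\ forall x, x <> b -> x <> a -> t x = x).
Proof. intros [H1 [H2 [H3 H4]]]. repeat split; auto. Qed.

Definition trs {Omega : Type} (t : Omega -> Omega) a b : Prop :=
  a <> b /\ t a = b /\ t b = a /\ forall x, x <> a -> x <> b -> t x = x.

Lemma pair_core1 (G : Group) (Omega : Type) (act : gcar G -> Omega -> Omega) :
  is_action G Omega act ->
  (forall p q r, p <> q -> q <> r -> p <> r -> exists z, cyc_spec G Omega act z p q r) ->
  forall t1 t2 a b d, trs t1 a b -> trs t2 a d ->
  exists g, forall x, act g x = t1 (t2 x).
Proof.
  intros Hact AC t1 t2 a b d [Nab [t1a [t1b t1o]]] [Nad [t2a [t2d t2o]]].
  destruct (classic (d = b)) as [->|Ndb].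
  - exists (gone G). intro x. rewrite (act_one _ _ _ Hact).
    destruct (classic (x = a)) as [->|Nxa]. rewrite t2a, t1b; auto.
    destruct (classic (x = b)) as [->|Nxb]. rewrite t2d, t1a; auto.
    rewrite t2o, t1o; auto.
  - destruct (AC a d b) as [z [za [zd [zb zo]]]]; auto.
    exists z. intro x.
    destruct (classic (x = a)) as [->|Nxa]. rewrite za, t2a, t1o; auto.
    destruct (classic (x = d)) as [->|Nxd]. rewrite zd, t2d, t1a; auto.
    destruct (classic (x = b)) as [->|Nxb]. rewrite zb, t2o, t1b; auto.
    rewrite zo, t2o, t1o; auto.
Qed.

Lemma pair_real (G : Group) (Omega : Type) (act : gcar G -> Omega -> Omega) :
  is_action G Omega act ->
  (forall p q r, p <> q -> q <> r -> p <> r -> exists z, cyc_spec G Omega act z p q r) ->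
  forall t1 t2, is_transposition Omega t1 -> is_transposition Omega t2 ->
  exists g, forall x, act g x = t1 (t2 x).
Proof.
  intros Hact AC t1 t2 [a [b H1]] [c [d H2]].
  assert (T1 : trs t1 a b) by exact H1. assert (T2 : trs t2 c d) by exact H2.
  assert (T1' : trs t1 b a) by (apply tr_spec_sym; exact H1).
  assert (T2' : trs t2 d c) by (apply tr_spec_sym; exact H2).
  clear H1 H2.
  destruct (classic (c = a)) as [E|Nca]. subst c. exact (pair_core1 G Omega act Hact AC t1 t2 a b d T1 T2).
  destruct (classic (c = b)) as [E|Ncb]. subst c. exact (pair_core1 G Omega act Hact AC t1 t2 b a d T1' T2).
  destruct (classic (d = a)) as [E|Nda]. subst d. exact (pair_core1 G Omega act Hact AC t1 t2 a b c T1 T2').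
  destruct (classic (d = b)) as [E|Ndb]. subst d. exact (pair_core1 G Omega act Hact AC t1 t2 b a c T1' T2').
  destruct T1 as [Nab [t1a [t1b t1o]]]. destruct T2 as [Ncd [t2c [t2d t2o]]].
  destruct (AC c a d) as [z1 [z1c [z1a [z1d z1o]]]]; auto.
  destruct (AC a b c) as [z2 [z2a [z2b [z2c z2o]]]]; auto.
  exists (gmul G z1 z2). intro x. rewrite (act_mul _ _ _ Hact).
  destruct (classic (x = a)) as [->|Nxa]. rewrite z2a, z1o, t2o, t1a; auto.
  destruct (classic (x = b)) as [->|Nxb]. rewrite z2b, z1c, t2o, t1b; auto.
  destruct (classic (x = c)) as [->|Nxc]. rewrite z2c, z1a, t2c, t1o; auto.
  destruct (classic (x = d)) as [->|Nxd]. rewrite z2o, z1d, t2d, t1o; auto.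
  rewrite z2o, z1o, t2o, t1o; auto.
Qed.

Lemma alt_real (G : Group) (Omega : Type) (act : gcar G -> Omega -> Omega) :
  is_action G Omega act ->
  (forall p q r, p <> q -> q <> r -> p <> r -> exists z, cyc_spec G Omega act z p q r) ->
  forall sigma, in_Alt_f Omega sigma -> exists g, forall x, act g x = sigma x.
Proof.
  intros Hact AC sigma [l [F [[n En] C]]].
  cut (exists g, forall x, act g x = compose_all Omega l x).
  { intros [g Hg]. exists g. intro x. rewrite Hg. apply C. }
  clear C sigma. revert l F En. induction n as [|n IH]; intros l F En.
  - destruct l; [|simpl in En; lia]. exists (gone G). intro; apply (act_one _ _ _ Hact).
  - destruct l as [|t1 [|t2 l]]; simpl in En; try lia.
    inversion F as [|? ? F1 F']; subst. inversion F' as [|? ? F2 F'']; subst.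
    destruct (IH l F'' ltac:(lia)) as [g Hg].
    destruct (pair_real G Omega act Hact AC t1 t2 F1 F2) as [g' Hg'].
    exists (gmul G g' g). intro x. rewrite (act_mul _ _ _ Hact), Hg', Hg. reflexivity.
Qed.

Lemma eval_app (G : Group) tau (u v : word G) :
  eval_word G tau (u ++ v) = gmul G (eval_word G tau u) (eval_word G tau v).
Proof.
  induction u as [|a u IH]; simpl. rewrite gmul1l; auto.
  rewrite IH, gmulA. auto.
Qed.

Lemma eval_wequiv (G : Group) tau (u v : word G) : wequiv G u v -> eval_word G tau u = eval_word G tau v.
Proof.
  induction 1; auto; try congruence.
  - rewrite !eval_app. simpl. rewrite !gmul1r, gmulA. auto.
  - rewrite !eval_app. simpl. rewrite !gmul1l. auto.
  - rewrite !eval_app. simpl. rewrite gmul1r. f_equal.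
    destruct b; simpl; rewrite ?gmulVr, ?gmulVl, gmul1l; auto.
Qed.

Definition RED (G : Group) (u : word G) : Prop :=
  (forall u1 u2, u <> u1 ++ inl (gone G) :: u2) /\
  (forall u1 u2 g h, u <> u1 ++ inl g :: inl h :: u2) /\
  (forall u1 u2 b, u <> u1 ++ inr b :: inr (negb b) :: u2).

Lemma RED_tail (G : Group) a (v : word G) : RED G (a :: v) -> RED G v.
Proof.
  intros [H1 [H2 H3]]. split; [|split].
  - intros u1 u2 E. apply (H1 (a :: u1) u2). rewrite E; auto.
  - intros u1 u2 g h E. apply (H2 (a :: u1) u2 g h). rewrite E; auto.
  - intros u1 u2 b E. apply (H3 (a :: u1) u2 b). rewrite E; auto.
Qed.

Lemma min_red (G : Group) (w u : word G) : wequiv G w u ->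
  (forall u', wequiv G w u' -> length u <= length u') -> RED G u.
Proof.
  intros Hw Hm. split; [|split].
  - intros u1 u2 E. subst u. specialize (Hm (u1 ++ u2)).
    assert (wequiv G w (u1 ++ u2)).
    { eapply wequiv_trans. exact Hw. exact (wequiv_one G u1 u2). }
    specialize (Hm H). rewrite !length_app in Hm. simpl in Hm. lia.
  - intros u1 u2 g h E. subst u. specialize (Hm (u1 ++ inl (gmul G g h) :: u2)).
    assert (wequiv G w (u1 ++ inl (gmul G g h) :: u2)).
    { eapply wequiv_trans. exact Hw. exact (wequiv_mul G u1 u2 g h). }
    specialize (Hm H). rewrite !length_app in Hm. simpl in Hm. lia.
  - intros u1 u2 b E. subst u. specialize (Hm (u1 ++ u2)).
    assert (wequiv G w (u1 ++ u2)).
    { eapply wequiv_trans. exact Hw. exact (wequiv_tt G u1 u2 b). }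
    specialize (Hm H). rewrite !length_app in Hm. simpl in Hm. lia.
Qed.

Definition pairb {Omega : Type} (b : bool) (c p : Omega) : Omega * Omega :=
  if b then (c, p) else (p, c).

Lemma letter_step (G : Group) (Omega : Type) (act : gcar G -> Omega -> Omega) :
  is_action G Omega act -> forall tau b c p P,
  realizes G Omega act tau (pairb b c p :: P) -> act (eval_letter G tau (inr b)) c = p.
Proof.
  intros Hact tau b c p P HR. specialize (HR (pairb b c p) (or_introl eq_refl)).
  destruct b; simpl in *; auto. rewrite <- HR. apply (act_invl _ _ _ Hact).
Qed.

Lemma realizes_tail (G : Group) (Omega : Type) (act : gcar G -> Omega -> Omega) tau q P :
  realizes G Omega act tau (q :: P) -> realizes G Omega act tau P.
Proof. intros H q' Hq'. apply H. right; auto. Qed.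

Lemma valid_add (Omega : Type) (P : list (Omega * Omega)) (L : list Omega) (b : bool) (c p : Omega) :
  NoDup (map fst P) -> NoDup (map snd P) ->
  (forall a, In a (map fst P) -> In a L) -> (forall a, In a (map snd P) -> In a L) ->
  (if b then ~ In c (map fst P) else ~ In c (map snd P)) -> ~ In p L ->
  NoDup (map fst (pairb b c p :: P)) /\ NoDup (map snd (pairb b c p :: P)).
Proof.
  intros N1 N2 S1 S2 Hb Hp. destruct b; simpl; split; constructor; auto.
Qed.

Lemma pairb_fst (Omega : Type) b (c p a : Omega) P :
  In a (map fst (pairb b c p :: P)) -> a = c \/ a = p \/ In a (map fst P).
Proof. destruct b; simpl; intuition. Qed.
Lemma pairb_snd (Omega : Type) b (c p a : Omega) P :
  In a (map snd (pairb b c p :: P)) -> a = c \/ a = p \/ In a (map snd P).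
Proof. destruct b; simpl; intuition. Qed.

Definition infsupp (G : Group) (Omega : Type) (act : gcar G -> Omega -> Omega) g : Prop :=
  ~ exists l : list Omega, forall x, act g x <> x -> In x l.

Definition INT' (G : Group) (Omega : Type) (act : gcar G -> Omega -> Omega) (v : word G) : Prop :=
  forall l1 l2 g, v = l1 ++ inl g :: l2 -> l2 <> [] -> infsupp G Omega act g.

Lemma INT'_tail (G : Group) (Omega : Type) (act : gcar G -> Omega -> Omega) a v :
  INT' G Omega act (a :: v) -> INT' G Omega act v.
Proof. intros H l1 l2 g E N. apply (H (a :: l1) l2 g); auto. rewrite E; auto. Qed.

Lemma constr (G : Group) (Omega : Type) (act : gcar G -> Omega -> Omega) :
  is_action G Omega act -> infinite_type Omega -> forall n (v : word G) b,
  length v <= n -> RED G (inr b :: v) -> INT' G Omega act (inr b :: v) ->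
  exists P x c L, NoDup (map fst P) /\ NoDup (map snd P) /\
    (forall a, In a (map fst P) -> In a L) /\ (forall a, In a (map snd P) -> In a L) /\
    In c L /\ (if b then ~ In c (map fst P) else ~ In c (map snd P)) /\
    length P <= length v /\
    forall p, ~ In p L -> forall tau, realizes G Omega act tau (pairb b c p :: P) ->
      act (eval_word G tau (inr b :: v)) x = p.
Proof.
  intros Hact Hinf n. induction n as [|n IH]; intros v b Hlen Hred Hint.
  - destruct v; simpl in Hlen; [|lia].
    destruct (fresh _ Hinf []) as [x _].
    exists [], x, x, [x]. repeat split; simpl; auto; try (intros; contradiction); try constructor.
    destruct b; simpl; auto.
    intros p Hp tau HR. rewrite (act_mul _ _ _ Hact), (act_one _ _ _ Hact).
    eapply letter_step; eauto.
  - destruct v as [|[g|b'] v].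
    + destruct (fresh _ Hinf []) as [x _].
      exists [], x, x, [x]. repeat split; simpl; auto; try (intros; contradiction); try constructor.
      destruct b; simpl; auto.
      intros p Hp tau HR. rewrite (act_mul _ _ _ Hact), (act_one _ _ _ Hact).
      eapply letter_step; eauto.
    + destruct v as [|[h|b'] v].
      * destruct (fresh _ Hinf []) as [x _].
        exists [], x, (act g x), [act g x]. repeat split; simpl; auto; try (intros; contradiction); try constructor.
        destruct b; simpl; auto.
        intros p Hp tau HR. rewrite !(act_mul _ _ _ Hact), (act_one _ _ _ Hact). simpl.
        eapply letter_step; eauto.
      * exfalso. destruct Hred as [_ [H2 _]]. apply (H2 [inr b] v g h). reflexivity.
      * assert (Hg : infsupp G Omega act g).
        { apply (Hint [inr b] (inr b' :: v) g); [reflexivity|discriminate]. }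
        destruct (IH v b') as [P [x [c0 [L [N1 [N2 [S1 [S2 [Hc0 [Hb0 [HlP Hev]]]]]]]]]]].
        { simpl in Hlen; lia. }
        { do 2 apply RED_tail in Hred. exact Hred. }
        { do 2 apply INT'_tail in Hint. exact Hint. }
        assert (Hp0 : exists p0, ~ In p0 L /\ ~ In (act g p0) L /\ act g p0 <> p0).
        { apply NNPP. intro Hn. apply Hg. exists (L ++ map (act (ginv G g)) L).
          intros z Hz. apply in_or_app. destruct (classic (In z L)) as [Hz1|Hz1]; [left; auto|right].
          destruct (classic (In (act g z) L)) as [Hz2|Hz2].
          - rewrite <- (act_invl _ _ _ Hact g z). apply in_map; auto.
          - exfalso. apply Hn. exists z. auto. }
        destruct Hp0 as [p0 [Hp0 [Hgp0 Ngp0]]].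
        destruct (valid_add _ P L b' c0 p0 N1 N2 S1 S2 Hb0 Hp0) as [N1' N2'].
        assert (Hout : forall a, (In a (map fst (pairb b' c0 p0 :: P)) \/ In a (map snd (pairb b' c0 p0 :: P))) -> a = p0 \/ In a L).
        { intros a [Ha|Ha]; [apply pairb_fst in Ha|apply pairb_snd in Ha]; destruct Ha as [->|[->|Ha]]; auto. }
        exists (pairb b' c0 p0 :: P), x, (act g p0), (p0 :: act g p0 :: L).
        split; [auto|split; [auto|split; [|split; [|split; [|split; [|split]]]]]].
        -- intros a Ha. destruct (Hout a (or_introl Ha)); simpl; auto.
        -- intros a Ha. destruct (Hout a (or_intror Ha)); simpl; auto.
        -- simpl; auto.
        -- assert (F : forall a, (In a (map fst (pairb b' c0 p0 :: P)) \/ In a (map snd (pairb b' c0 p0 :: P))) -> a <> act g p0).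
           { intros a Ha E. destruct (Hout a Ha) as [E'|E']; subst a; auto. }
           destruct b; intro Hin; eapply F; eauto.
        -- simpl. lia.
        -- intros p Hp tau HR.
           change (eval_word G tau (inr b :: inl g :: inr b' :: v)) with
             (gmul G (eval_letter G tau (inr b)) (gmul G g (eval_word G tau (inr b' :: v)))).
           rewrite (act_mul _ _ _ Hact (eval_letter G tau (inr b))), (act_mul _ _ _ Hact g).
           rewrite (Hev p0 Hp0 tau (realizes_tail _ _ _ _ _ _ HR)).
           exact (letter_step _ _ _ Hact tau b _ p _ HR).
    + assert (Eb : b' = b).
      { destruct Hred as [_ [_ H3]]. destruct b, b'; auto; exfalso; exact (H3 [] v _ eq_refl). }
      subst b'.
      destruct (IH v b) as [P [x [c0 [L [N1 [N2 [S1 [S2 [Hc0 [Hb0 [HlP Hev]]]]]]]]]]].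
      { simpl in Hlen; lia. }
      { apply RED_tail in Hred. exact Hred. }
      { apply INT'_tail in Hint. exact Hint. }
      destruct (fresh _ Hinf L) as [p0 Hp0].
      destruct (valid_add _ P L b c0 p0 N1 N2 S1 S2 Hb0 Hp0) as [N1' N2'].
      exists (pairb b c0 p0 :: P), x, p0, (p0 :: L).
      split; [auto|split; [auto|split; [|split; [|split; [|split; [|split]]]]]].
      * intros a Ha. apply pairb_fst in Ha. simpl. destruct Ha as [->|[->|Ha]]; auto.
      * intros a Ha. apply pairb_snd in Ha. simpl. destruct Ha as [->|[->|Ha]]; auto.
      * simpl; auto.
      * assert (Nc : p0 <> c0) by (intro E; subst; auto).
        destruct b; simpl; intros [E|E]; [congruence| apply Hp0; auto | congruence | apply Hp0; auto].
      * simpl. lia.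
      * intros p Hp tau HR.
        change (eval_word G tau (inr b :: inr b :: v)) with
             (gmul G (eval_letter G tau (inr b)) (eval_word G tau (inr b :: v))).
        rewrite (act_mul _ _ _ Hact (eval_letter G tau (inr b))).
        rewrite (Hev p0 Hp0 tau (realizes_tail _ _ _ _ _ _ HR)).
        exact (letter_step _ _ _ Hact tau b _ p _ HR).
Qed.

Definition INT (G : Group) (Omega : Type) (act : gcar G -> Omega -> Omega) (u : word G) : Prop :=
  forall l1 l2 g, u = l1 ++ inl g :: l2 -> l1 <> [] -> l2 <> [] -> infsupp G Omega act g.

Lemma no_identity (G : Group) (Omega : Type) (act : gcar G -> Omega -> Omega) (u : word G) :
  is_action G Omega act -> infinite_type Omega ->
  (forall P : list (Omega * Omega), NoDup (map fst P) -> NoDup (map snd P) -> length P <= length u ->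
     exists g, realizes G Omega act g P) ->
  RED G u -> INT G Omega act u -> mixed_identity G u -> u <> [] -> False.
Proof.
  intros Hact Hinf TR Hred Hint Hid Hne.
  destruct u as [|[g0|b] v]; [auto|..].
  - destruct v as [|[h|b] v].
    + destruct Hred as [H1 _]. apply (H1 [] []). specialize (Hid (gone G)). simpl in Hid.
      rewrite gmul1r in Hid. rewrite Hid. reflexivity.
    + destruct Hred as [_ [H2 _]]. exact (H2 [] v g0 h eq_refl).
    + destruct (constr G Omega act Hact Hinf (length v) v b (le_n _)) as
        [P [x [c [L [N1 [N2 [S1 [S2 [Hc [Hb [HlP Hev]]]]]]]]]]].
      { apply RED_tail in Hred; auto. }
      { intros l1 l2 g E N. apply (Hint (inl g0 :: l1) l2 g); [exact (f_equal (cons (inl g0)) E)|discriminate|exact N]. }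
      destruct (fresh _ Hinf (act (ginv G g0) x :: L)) as [p Hp].
      assert (HpL : ~ In p L) by (intro; apply Hp; right; auto).
      destruct (valid_add _ P L b c p N1 N2 S1 S2 Hb HpL) as [N1' N2'].
      destruct (TR _ N1' N2') as [tau Htau]. { simpl. lia. }
      specialize (Hev p HpL tau Htau). specialize (Hid tau).
      change (eval_word G tau (inl g0 :: inr b :: v)) with (gmul G g0 (eval_word G tau (inr b :: v))) in Hid.
      assert (E : act (gmul G g0 (eval_word G tau (inr b :: v))) x = x) by (rewrite Hid; apply (act_one _ _ _ Hact)).
      rewrite (act_mul _ _ _ Hact) in E.
      assert (E' : act g0 p = x) by (rewrite <- Hev; exact E).
      apply Hp. left. rewrite <- E'. apply (act_invl _ _ _ Hact).
  - destruct (constr G Omega act Hact Hinf (length v) v b (le_n _)) as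
        [P [x [c [L [N1 [N2 [S1 [S2 [Hc [Hb [HlP Hev]]]]]]]]]]]; auto.
    { intros l1 l2 g E N. apply (Hint l1 l2 g); auto. intro E'. subst l1. discriminate. }
    destruct (fresh _ Hinf (x :: L)) as [p Hp].
    assert (HpL : ~ In p L) by (intro; apply Hp; right; auto).
    destruct (valid_add _ P L b c p N1 N2 S1 S2 Hb HpL) as [N1' N2'].
    destruct (TR _ N1' N2') as [tau Htau]. { simpl. lia. }
    specialize (Hev p HpL tau Htau).
    pose proof (eq_trans (f_equal (fun z => act z x) (Hid tau)) (act_one _ _ _ Hact x)) as E.
    cbv beta in E.
    apply Hp. left. rewrite <- Hev. symmetry. exact E.
Qed.

Theorem propositionA1 (G : Group) (w : word G) (k : nat) :
  infinite_type (gcar G) ->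
  nontrivial G w ->
  mixed_identity G w ->
  word_length G w k ->
  (contains_Alt_f G /\ ~ td_lt G k) \/ (~ contains_Alt_f G /\ td_lt G k).
Proof.
  intros HinfG Hnt Hid [[u [Hwu Hlen]] Hmin].
  destruct (classic (contains_Alt_f G)) as [HA|HnA].
  - left. split; auto. intro Htd. destruct HA as (Omega & act & HinfO & Hact & Hf & Hall).
    pose proof (Htd k Omega act Hact Hf (alt_mtrans G Omega act k HinfO Hall)). lia.
  - right. split; auto. intros m Omega act Hact Hf Htr.
    destruct (Nat.lt_ge_cases m k) as [Hlt|Hkm]; auto. exfalso.
    pose proof (omega_infinite G Omega act Hf HinfG) as HinfO.
    pose proof (trans_list G Omega act m HinfO Htr) as TR.
    assert (Hred : RED G u) by (apply (min_red G w u Hwu); intros u' Hu'; rewrite Hlen; apply Hmin; auto).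
    assert (Hidu : mixed_identity G u) by (intro tau; rewrite <- (eval_wequiv G tau w u Hwu); apply Hid).
    assert (Hne : u <> []) by (intro E; subst u; apply Hnt; exact Hwu).
    destruct (classic (INT G Omega act u)) as [HI|HnI].
    + apply (no_identity G Omega act u Hact HinfO); auto.
      intros P N1 N2 HP. apply TR; auto. lia.
    + apply HnA. exists Omega, act. split; [auto|split; [auto|split; [auto|]]].
      assert (Hex : exists l1 l2 g, u = l1 ++ inl g :: l2 /\ l1 <> [] /\ l2 <> [] /\
                      exists l : list Omega, forall x, act g x <> x -> In x l).
      { apply NNPP. intro Hn. apply HnI. intros l1 l2 g E N1 N2 Hl. apply Hn.
        exists l1, l2, g. auto. }
      destruct Hex as [l1 [l2 [g [E [N1 [N2 [l Hl]]]]]]].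
      assert (H3 : 3 <= m).
      { rewrite <- Hlen in Hkm. subst u. rewrite length_app in Hkm. simpl in Hkm.
        destruct l1; [congruence|]. destruct l2; [congruence|]. simpl in Hkm. lia. }
      assert (Hg1 : g <> gone G).
      { intro Eg. subst g. destruct Hred as [H1 _]. exact (H1 l1 l2 E). }
      assert (Ha : exists a, act g a <> a).
      { apply NNPP. intro Hn. apply Hg1. apply Hf. intro x. rewrite (act_one _ _ _ Hact).
        apply NNPP. intro Hx. apply Hn. exists x; auto. }
      destruct Ha as [a Ha].
      destruct (three_cycle G Omega act Hact HinfO) with (g := g) (l := l) (a := a)
        as [y [p [q [r [Npq [Nqr [Npr Hy]]]]]]]; auto.
      { intros x1 x2 z1 z2 Nx Nz. destruct (TR [(x1,z1);(x2,z2)]) as [h Hh].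
        { simpl. constructor; [simpl; intuition|constructor; [simpl; auto|constructor]]. }
        { simpl. constructor; [simpl; intuition|constructor; [simpl; auto|constructor]]. }
        { simpl. lia. }
        exists h. split; [apply (Hh (x1,z1))|apply (Hh (x2,z2))]; simpl; auto. }
      apply alt_real; auto.
      apply (all_cycles G Omega act Hact) with (y := y) (a := p) (b := q) (c := r); auto.
      intros P NP1 NP2 HP. apply TR; auto. lia.
Qed.
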